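(* Assume $d_{min}\ge d_{close}+d_{open}$, and let $R$ be a regular run whose initial state has Dir = open and GateStatus = opened. (1) If the positive significant moments of Dir form an infinite sequence $\gamma_1<\gamma_2<\gamma_3<\cdots$, then the positive significant moments of GateStatus form an infinite sequence $\delta_1<\delta_2<\delta_3<\cdots$ with $\delta_i\in(\gamma_i,\gamma_{i+1})$ for every $i$. (2) If the positive significant moments of Dir form a finite sequence $\gamma_1<\cdots<\gamma_n$, then the positive significant moments of GateStatus form a sequence $\delta_1<\cdots<\delta_n$ with $\delta_i\in(\gamma_i,\gamma_{i+1})$ for $i<n$ and $\delta_n>\gamma_n$.
   Context: Setting (evolving algebra for the railroad crossing). States are structures over a vocabulary containing: a finite universe Tracks; the reals and ExtendedReals $=\mathbb{R}\cup\{\infty\}$ with standard $<$ and $+$ ($\infty$ largest); a nullary real-valued symbol $\mathrm{CT}$ (current time); positive real constants $d_{close},d_{open},d_{min},d_{max}$ with $d_{close}<d_{min}\le d_{max}$; a unary function TrackStatus from Tracks to $\{\text{empty},\text{coming},\text{incrossing}\}$; a unary function Deadline from Tracks to ExtendedReals; a nullary Dir with values in $\{\text{open},\text{close}\}$; a nullary GateStatus with values in $\{\text{opened},\text{closed}\}$. Put $W=d_{min}-d_{close}$ and $\Delta_{close}=d_{close}+(d_{max}-d_{min})=d_{max}-W$. For a track $x$, $s(x)$ is the condition [$\mathrm{TrackStatus}(x)=\text{empty}$ or $\mathrm{CT}+d_{open}<\mathrm{Deadline}(x)$], and SafeToOpen is $\forall x\in\mathrm{Tracks}\ s(x)$. The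 program has two modules (agents). Gate: simultaneously OpenGate ''if Dir=open then GateStatus:=opened'' and CloseGate ''if Dir=close then GateStatus:=closed''. Controller: simultaneously, for every track $x$, SetDeadline$(x)$ ''if TrackStatus$(x)$=coming and Deadline$(x)=\infty$ then Deadline$(x):=\mathrm{CT}+W$'', SignalClose$(x)$ ''if $\mathrm{CT}=$Deadline$(x)$ then Dir:=close'', ClearDeadline$(x)$ ''if TrackStatus$(x)$=empty and Deadline$(x)<\infty$ then Deadline$(x):=\infty$'', together with SignalOpen ''if Dir=close and SafeToOpen then Dir:=open''. Executing a module means computing all updates it generates in the current state and performing them simultaneously (nothing happens if the update set is inconsistent). A module is enabled at a state if its update set is consistent and contains an update that changes the state. TrackStatus is external (changed only by the environment); Deadline, Dir, GateStatus are internal (changed only by the modules); other symbols are static. Runs: for $t\mapsto R(t)$, $t\in[0,\infty)$, let $\rho(t)$ be the reduct of $R(t)$ without CT. $R$ is a pre-run if all $R(t)$ share a superuniverse, $\mathrm{CT}=t$ in $R(t)$, and for every $\tau>0$ there are $0=t_0<\dots<t_n=\tau$ with $\rho$ constant on each $(t_i,t_{i+1})$. For a term $e$ (free variables fixed), $e_t$ is its value in $R(t)$, $e_{t+}$ (resp. $e_{t-}$, $t>0$) its constant value on some $(t,t+\epsilon)$ (resp. $(t-\epsilon,t)$); likewise $\rho(t\pm)$. $e$ holds over an interval if it holds at each point; $e$ becomes (is set to) $a$ at $t$ if $e_{t-}\ne a=e_t$ or $e_t\neq a=e_{t+}$. A moment $t$ is significant for $e$ if every neighbourhood of $t$ contains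 a moment $a$ with $e_a\ne e_t$; positive significant moments are those $>0$. A pre-run is a run if (i) whenever $\rho(t+)\neq\rho(t)$, $\rho(t+)$ is the CT-free reduct of the result of executing some modules at $R(t)$ (these agents fire at $t$), with external functions equal in $\rho(t)$ and $\rho(t+)$; (ii) whenever $t>0$ and $\rho(t)\ne\rho(t-)$, they differ only in external functions. An agent is immediate if it fires at every moment it is enabled; bounded if immediate or there is $b>0$ with no interval $(t,t+b)$ over which it is enabled but never fires. Initial states: TrackStatus$(x)$=empty and Deadline$(x)=\infty$ for every track $x$. A regular run is a run $R$ with $R(0)$ initial such that: (Train Motion) for each track $x$ there is a finite or infinite sequence $0=t_0<t_1<t_2<\cdots$ (the significant moments of $x$) with TrackStatus$(x)$=empty over each $[t_{3i},t_{3i+1})$, =coming over each $[t_{3i+1},t_{3i+2})$ where $d_{min}\le t_{3i+2}-t_{3i+1}\le d_{max}$, =incrossing over each $[t_{3i+2},t_{3i+3})$, and, if the sequence is finite with last element $t_k$, then $3\mid k$ and TrackStatus$(x)$=empty over $[t_k,\infty)$; (Controller Timing) Controller is immediate; (Gate Timing) Gate is bounded, there is no interval $(t,t+d_{close})$ over which Dir=close and GateStatus=opened both hold, and no interval $(t,t+d_{open})$ over which Dir=open and GateStatus=closed both hold. *)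

(* Defs.v *)
From Stdlib Require Import Reals Lra List.
Open Scope R_scope.
Set Implicit Arguments.

(** * Railroad crossing evolving algebra (Gurevich--Huggins style) *)

Inductive ER : Type := Fin (r : R) | Inf.

Definition ERlt (a b : ER) : Prop :=
  match a, b with
  | Fin x, Fin y => x < y
  | Fin _, Inf => True
  | Inf, _ => False
  end.

Inductive TStatus : Type := empty | coming | incrossing.
Inductive DirT : Type := open | close.
Inductive GStatus : Type := opened | closed.

Record Params : Type := mkParams {
  d_close : R; d_open : R; d_min : R; d_max : R }.

Definition W (p : Params) : R := d_min p - d_close p.

(** The CT-free part of a state (the superuniverse is fixed, so a state is
    determined by the values of the dynamic functions). *)
Record State (Tr : Type) : Type := mkState {
  TrackStatus : Tr -> TStatus;
  Deadline : Tr -> ER;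
  Dir : DirT;
  GateStatus : GStatus }.

Inductive Update (Tr : Type) : Type :=
  | UDeadline (x : Tr) (v : ER)
  | UDir (v : DirT)
  | UGate (v : GStatus).
Arguments UDir {Tr} v.
Arguments UGate {Tr} v.

Inductive Agent : Type := Gate | Controller.

Definition s_ok (p : Params) {Tr} (st : State Tr) (ct : R) (x : Tr) : Prop :=
  TrackStatus st x = empty \/ ERlt (Fin (ct + d_open p)) (Deadline st x).

Definition SafeToOpen (p : Params) {Tr} (st : State Tr) (ct : R) : Prop :=
  forall x, s_ok p st ct x.

Definition updates (p : Params) {Tr} (A : Agent) (st : State Tr) (ct : R)
  (u : Update Tr) : Prop :=
  match A with
  | Gate =>
      (Dir st = open /\ u = UGate opened) \/
      (Dir st = close /\ u = UGate closed)
  | Controller =>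
      (exists x, TrackStatus st x = coming /\ Deadline st x = Inf /\
                 u = UDeadline x (Fin (ct + W p))) \/
      (exists x, Deadline st x = Fin ct /\ u = UDir close) \/
      (exists x, TrackStatus st x = empty /\ ERlt (Deadline st x) Inf /\
                 u = UDeadline x Inf) \/
      (Dir st = close /\ SafeToOpen p st ct /\ u = UDir open)
  end.

Definition consistent {Tr} (U : Update Tr -> Prop) : Prop :=
  (forall x v1 v2, U (UDeadline x v1) -> U (UDeadline x v2) -> v1 = v2) /\
  (forall v1 v2, U (UDir v1) -> U (UDir v2) -> v1 = v2) /\
  (forall v1 v2, U (UGate v1) -> U (UGate v2) -> v1 = v2).

Definition applied {Tr} (U : Update Tr -> Prop) (st st' : State Tr) : Prop :=
  TrackStatus st' = TrackStatus st /\
  (forall x, (forall v, U (UDeadline x v) -> Deadline st' x = v) /\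
             ((forall v, ~ U (UDeadline x v)) -> Deadline st' x = Deadline st x)) /\
  ((forall v, U (UDir v) -> Dir st' = v) /\
   ((forall v, ~ U (UDir v)) -> Dir st' = Dir st)) /\
  ((forall v, U (UGate v) -> GateStatus st' = v) /\
   ((forall v, ~ U (UGate v)) -> GateStatus st' = GateStatus st)).

Definition exec (p : Params) {Tr} (M : Agent -> Prop) (st : State Tr) (ct : R)
  (st' : State Tr) : Prop :=
  let U := fun u => exists A, M A /\ updates p A st ct u in
  (consistent U /\ applied U st st') \/ (~ consistent U /\ st' = st).

Definition changes {Tr} (st : State Tr) (u : Update Tr) : Prop :=
  match u with
  | UDeadline x v => Deadline st x <> v
  | UDir v => Dir st <> v
  | UGate v => GateStatus st <> v
  end.

Definition enabled (p : Params) {Tr} (A : Agent) (st : State Tr) (ct : R) : Prop :=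
  consistent (updates p A st ct) /\
  exists u, updates p A st ct u /\ changes st u.

(** A run is given by rho : R -> State Tr, rho t being the CT-free reduct of
    R(t) (in R(t), CT = t).  Only t >= 0 matters. *)
Definition Traj (Tr : Type) := R -> State Tr.

Definition pre_run {Tr} (rho : Traj Tr) : Prop :=
  forall tau, 0 < tau ->
  exists (n : nat) (q : nat -> R),
    q 0%nat = 0 /\ q n = tau /\
    (forall i, (i < n)%nat -> q i < q (S i)) /\
    (forall i, (i < n)%nat -> forall u v,
        q i < u < q (S i) -> q i < v < q (S i) -> rho u = rho v).

Definition right_val {X} (e : R -> X) (t : R) (a : X) : Prop :=
  exists eps, 0 < eps /\ forall u, t < u < t + eps -> e u = a.

Definition left_val {X} (e : R -> X) (t : R) (a : X) : Prop :=
  exists eps, 0 < eps /\ eps <= t /\ forall u, t - eps < u < t -> e u = a.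

Definition holds_over (P : R -> Prop) (a b : R) : Prop :=
  forall u, a < u < b -> P u.

Definition significant {X} (e : R -> X) (t : R) : Prop :=
  0 <= t /\
  forall eps, 0 < eps -> exists a, 0 <= a /\ Rabs (a - t) < eps /\ e a <> e t.

Definition fires (p : Params) {Tr} (rho : Traj Tr) (A : Agent) (t : R) : Prop :=
  exists s, right_val rho t s /\ s <> rho t /\
  exists M : Agent -> Prop, M A /\ exec p M (rho t) t s.

Definition run (p : Params) {Tr} (rho : Traj Tr) : Prop :=
  pre_run rho /\
  (forall t s, 0 <= t -> right_val rho t s -> s <> rho t ->
     (exists M : Agent -> Prop, exec p M (rho t) t s) /\
     TrackStatus s = TrackStatus (rho t)) /\
  (forall t s, 0 < t -> left_val rho t s -> s <> rho t ->
     Deadline s = Deadline (rho t) /\ Dir s = Dir (rho t) /\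
     GateStatus s = GateStatus (rho t)).

Definition immediate (p : Params) {Tr} (rho : Traj Tr) (A : Agent) : Prop :=
  forall t, 0 <= t -> enabled p A (rho t) t -> fires p rho A t.

Definition bounded (p : Params) {Tr} (rho : Traj Tr) (A : Agent) : Prop :=
  immediate p rho A \/
  exists b, 0 < b /\
    ~ exists t, 0 <= t /\
        holds_over (fun u => enabled p A (rho u) u) t (t + b) /\
        holds_over (fun u => ~ fires p rho A u) t (t + b).

Definition initial {Tr} (st : State Tr) : Prop :=
  forall x, TrackStatus st x = empty /\ Deadline st x = Inf.

Definition TS_over {Tr} (rho : Traj Tr) (x : Tr) (v : TStatus) (a b : R) : Prop :=
  forall u, a <= u < b -> TrackStatus (rho u) x = v.

Definition train_cycle (p : Params) {Tr} (rho : Traj Tr) (x : Tr)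
  (q : nat -> R) (i : nat) : Prop :=
  TS_over rho x empty (q (3 * i)%nat) (q (3 * i + 1)%nat) /\
  TS_over rho x coming (q (3 * i + 1)%nat) (q (3 * i + 2)%nat) /\
  d_min p <= q (3 * i + 2)%nat - q (3 * i + 1)%nat <= d_max p /\
  TS_over rho x incrossing (q (3 * i + 2)%nat) (q (3 * i + 3)%nat).

Definition train_motion (p : Params) {Tr} (rho : Traj Tr) : Prop :=
  forall x : Tr,
    (exists q : nat -> R, q 0%nat = 0 /\ (forall i, q i < q (S i)) /\
       forall i, train_cycle p rho x q i) \/
    (exists (q : nat -> R) (m : nat), q 0%nat = 0 /\
       (forall i, (i < 3 * m)%nat -> q i < q (S i)) /\
       (forall i, (i < m)%nat -> train_cycle p rho x q i) /\
       (forall u, q (3 * m)%nat <= u -> TrackStatus (rho u) x = empty)).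

Definition regular_run (p : Params) {Tr} (rho : Traj Tr) : Prop :=
  run p rho /\ initial (rho 0) /\
  train_motion p rho /\
  immediate p rho Controller /\
  bounded p rho Gate /\
  (~ exists t, 0 <= t /\
      holds_over (fun u => Dir (rho u) = close /\ GateStatus (rho u) = opened)
        t (t + d_close p)) /\
  (~ exists t, 0 <= t /\
      holds_over (fun u => Dir (rho u) = open /\ GateStatus (rho u) = closed)
        t (t + d_open p)).

Definition DirOf {Tr} (rho : Traj Tr) : R -> DirT := fun t => Dir (rho t).
Definition GateOf {Tr} (rho : Traj Tr) : R -> GStatus := fun t => GateStatus (rho t).

Definition pos_sig {X} (e : R -> X) (t : R) : Prop := 0 < t /\ significant e t.

(* Main.v *)
Require Import Defs.
From Stdlib Require Import Reals Lra Lia List Classical IndefiniteDescription.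
Open Scope R_scope.

Lemma rind (a b : R) (P : R -> Prop) :
  (exists e, 0 < e /\ forall u, a < u < a + e -> P u) ->
  (forall t, a < t < b -> P t -> exists e, 0 < e /\ forall u, t < u < t + e -> P u) ->
  (forall t, a < t < b -> (exists e, 0 < e /\ forall u, t - e < u < t -> P u) -> P t) ->
  forall t, a < t < b -> P t.
Proof.
  intros [e0 [He0 H0]] Hr Hl t0 Ht0.
  apply NNPP; intro Hn.
  set (S := fun x => a < x <= t0 /\ forall u, a < u < x -> P u).
  assert (HS : exists x, S x).
  { exists (Rmin (a + e0) t0). split.
    - split; [apply Rmin_glb_lt; lra | apply Rmin_r].
    - intros u Hu. apply H0. split; [lra|]. pose proof (Rmin_l (a+e0) t0); lra. }
  assert (Hb : bound S). { exists t0. intros x [Hx _]. lra. }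
  destruct (completeness S Hb HS) as [c [Hub Hlub]].
  destruct HS as [x0 Hx0].
  assert (Hc1 : a < c). { pose proof (Hub x0 Hx0). destruct Hx0 as [[? ?] _]. lra. }
  assert (Hc2 : c <= t0). { apply Hlub. intros x [Hx _]; lra. }
  assert (HA : forall u, a < u < c -> P u).
  { intros u Hu. apply NNPP; intro HnP.
    assert (c <= u). { apply Hlub. intros x [Hx Hx2].
      destruct (Rle_dec x u) as [|Hxu]; [auto|].
      exfalso; apply HnP; apply Hx2; lra. }
    lra. }
  assert (HPc : P c). { apply Hl; [lra|]. exists (c - a). split; [lra|]. intros u Hu; apply HA; lra. }
  destruct (Req_dec c t0) as [Heq|Hne]; [subst; contradiction|].
  destruct (Hr c ltac:(lra) HPc) as [e1 [He1 H1]].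
  assert (S (Rmin (c + e1) t0)).
  { split.
    - split; [apply Rmin_glb_lt; lra | apply Rmin_r].
    - intros u Hu. destruct (Rtotal_order u c) as [Hlt|[Heq|Hgt]].
      + apply HA; lra.
      + subst; auto.
      + apply H1. split; [lra|]. pose proof (Rmin_l (c+e1) t0); lra. }
  pose proof (Hub _ H). assert (c < Rmin (c+e1) t0) by (apply Rmin_glb_lt; lra). lra.
Qed.

Lemma rind0 (a b : R) (P : R -> Prop) :
  P a ->
  (forall t, a <= t < b -> P t -> exists e, 0 < e /\ forall u, t < u < t + e -> P u) ->
  (forall t, a < t < b -> (exists e, 0 < e /\ forall u, t - e < u < t -> P u) -> P t) ->
  forall t, a <= t < b -> P t.
Proof.
  intros Ha Hr Hl t Ht.
  destruct (Req_dec t a) as [->|Hne]; [auto|].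
  destruct (Rlt_dec a b) as [Hab|]; [|lra].
  apply (rind a b P); auto.
  - apply Hr; auto. lra.
  - intros. apply Hr; auto; lra.
  - lra.
Qed.

Lemma avoid_list (L : list R) : forall a b, a < b -> exists u, a < u < b /\ ~ In u L.
Proof.
  induction L as [|x L IH]; intros a b Hab.
  - exists ((a+b)/2). split; [lra|]. simpl; auto.
  - destruct (Rlt_dec a x) as [Hax|Hax].
    + destruct (IH a (Rmin b x) ltac:(apply Rmin_glb_lt; lra)) as [u [Hu Hn]].
      exists u. pose proof (Rmin_l b x). pose proof (Rmin_r b x). split; [lra|].
      simpl. intros [->|]; [lra|auto].
    + destruct (IH a b Hab) as [u [Hu Hn]]. exists u. split; auto.
      simpl. intros [->|]; [lra|auto].
Qed.

Lemma part_find (q : nat -> R) (n : nat) (t : R) :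
  (forall i, (i < n)%nat -> q i < q (S i)) -> q 0%nat <= t -> t < q n ->
  exists i, (i < n)%nat /\ q i <= t < q (S i).
Proof.
  induction n; intros Hq H0 Hn; [lra|].
  destruct (Rlt_dec t (q n)) as [Hlt|Hge].
  - destruct IHn as [i [Hi Hi2]]; auto. exists i; split; auto.
  - exists n. split; [lia|lra].
Qed.

Lemma part_find2 (q : nat -> R) (n : nat) (t : R) :
  (forall i, (i < n)%nat -> q i < q (S i)) -> q 0%nat < t -> t <= q n ->
  exists i, (i < n)%nat /\ q i < t <= q (S i).
Proof.
  induction n; intros Hq H0 Hn; [lra|].
  destruct (Rle_dec t (q n)) as [Hlt|Hge].
  - destruct IHn as [i [Hi Hi2]]; auto. exists i; split; auto.
  - exists n. split; [lia|lra].
Qed.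

Lemma part_nonneg (q : nat -> R) (n : nat) :
  q 0%nat = 0 -> (forall i, (i < n)%nat -> q i < q (S i)) -> forall i, (i <= n)%nat -> 0 <= q i.
Proof.
  intros H0 Hq i. induction i; intros Hi; [lra|].
  pose proof (Hq i ltac:(lia)). pose proof (IHi ltac:(lia)). lra.
Qed.

Definition Hyp {Tr} (p : Params) (rho : Traj Tr) : Prop :=
  (exists l : list Tr, forall x, In x l) /\ 0 < d_close p /\ 0 < d_open p /\ 0 < d_min p /\
  d_close p < d_min p /\ d_min p >= d_close p + d_open p /\ regular_run p rho.

Lemma RV {Tr} (p : Params) (rho : Traj Tr) : Hyp p rho ->
  forall t, 0 <= t -> exists s, right_val rho t s.
Proof.
  intros [_ [_ [_ [_ [_ [_ [[Hpr _] _]]]]]]] t Ht.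
  destruct (Hpr (t+1) ltac:(lra)) as [n [q [Hq0 [Hqn [Hinc Hc]]]]].
  destruct (part_find q n t Hinc ltac:(lra) ltac:(lra)) as [i [Hi [H1 H2]]].
  exists (rho ((t + q (S i))/2)). exists (q (S i) - t). split; [lra|].
  intros u Hu. apply (Hc i Hi); lra.
Qed.

Lemma LV {Tr} (p : Params) (rho : Traj Tr) : Hyp p rho ->
  forall t, 0 < t -> exists s, left_val rho t s.
Proof.
  intros [_ [_ [_ [_ [_ [_ [[Hpr _] _]]]]]]] t Ht.
  destruct (Hpr t Ht) as [n [q [Hq0 [Hqn [Hinc Hc]]]]].
  destruct (part_find2 q n t Hinc ltac:(lra) ltac:(lra)) as [i [Hi [H1 H2]]].
  pose proof (part_nonneg q n Hq0 Hinc i ltac:(lia)).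
  exists (rho ((q i + t)/2)). exists (t - q i). split; [lra|]. split; [lra|].
  intros u Hu. apply (Hc i Hi); lra.
Qed.

Lemma rv_unique {Tr} (rho : Traj Tr) t s1 s2 :
  right_val rho t s1 -> right_val rho t s2 -> s1 = s2.
Proof.
  intros [e1 [He1 H1]] [e2 [He2 H2]].
  set (u := t + Rmin e1 e2 / 2).
  assert (0 < Rmin e1 e2) by (apply Rmin_glb_lt; auto).
  pose proof (Rmin_l e1 e2). pose proof (Rmin_r e1 e2).
  rewrite <- (H1 u), <- (H2 u); auto; unfold u; lra.
Qed.

Lemma rv_const {Tr} (rho : Traj Tr) (c d : R) s :
  (forall u, c < u < d -> rho u = s) -> forall t, c <= t < d -> right_val rho t s.
Proof.
  intros H t Ht. exists (d - t). split; [lra|]. intros u Hu; apply H; lra.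
Qed.

Definition gof (v : DirT) : GStatus := match v with open => opened | close => closed end.

Definition UU (p : Params) {Tr} (M : Agent -> Prop) (st : State Tr) (ct : R) : Update Tr -> Prop :=
  fun u => exists A, M A /\ updates p A st ct u.

Lemma H_run {Tr} (p : Params) (rho : Traj Tr) : Hyp p rho -> run p rho.
Proof. intros (_&_&_&_&_&_&Hr&_). exact Hr. Qed.

Lemma LC {Tr} (p : Params) (rho : Traj Tr) : Hyp p rho ->
  forall t s, 0 < t -> left_val rho t s ->
  Deadline (rho t) = Deadline s /\ Dir (rho t) = Dir s /\ GateStatus (rho t) = GateStatus s.
Proof.
  intros H t s Ht Hl. destruct (H_run p rho H) as [_ [_ Hii]].
  destruct (classic (s = rho t)) as [->|Hne]; [auto|].
  destruct (Hii t s Ht Hl Hne) as [A1 [A2 A3]]. auto.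
Qed.

Lemma step {Tr} (p : Params) (rho : Traj Tr) : Hyp p rho ->
  forall t s, 0 <= t -> right_val rho t s ->
  s = rho t \/ exists M, consistent (UU p M (rho t) t) /\ applied (UU p M (rho t) t) (rho t) s.
Proof.
  intros H t s Ht Hr. destruct (H_run p rho H) as [_ [Hi _]].
  destruct (classic (s = rho t)) as [->|Hne]; [auto|].
  destruct (Hi t s Ht Hr Hne) as [[M Hex] _]. right. exists M.
  destruct Hex as [[Hc Ha]|[_ Heq]]; [split; auto | congruence].
Qed.

Lemma stepD {Tr} (p : Params) (rho : Traj Tr) : Hyp p rho ->
  forall t s, 0 <= t -> right_val rho t s ->
  Dir s = Dir (rho t) \/ exists A, updates p A (rho t) t (UDir (Dir s)).
Proof.
  intros H t s Ht Hr. destruct (step p rho H t s Ht Hr) as [->|[M [Hc Ha]]]; [auto|].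
  destruct Ha as (_&_&[Hd1 Hd2]&_).
  destruct (classic (exists v, UU p M (rho t) t (UDir v))) as [[v Hv]|Hn].
  - right. rewrite (Hd1 v Hv). destruct Hv as [A [_ HA]]. eauto.
  - left. apply Hd2. intros v Hv; apply Hn; eauto.
Qed.

Lemma stepG {Tr} (p : Params) (rho : Traj Tr) : Hyp p rho ->
  forall t s, 0 <= t -> right_val rho t s ->
  GateStatus s = GateStatus (rho t) \/ exists A, updates p A (rho t) t (UGate (GateStatus s)).
Proof.
  intros H t s Ht Hr. destruct (step p rho H t s Ht Hr) as [->|[M [Hc Ha]]]; [auto|].
  destruct Ha as (_&_&_&[Hd1 Hd2]).
  destruct (classic (exists v, UU p M (rho t) t (UGate v))) as [[v Hv]|Hn].
  - right. rewrite (Hd1 v Hv). destruct Hv as [A [_ HA]]. eauto.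
  - left. apply Hd2. intros v Hv; apply Hn; eauto.
Qed.

Lemma stepDL {Tr} (p : Params) (rho : Traj Tr) : Hyp p rho ->
  forall t s y, 0 <= t -> right_val rho t s ->
  Deadline s y = Deadline (rho t) y \/ exists A, updates p A (rho t) t (UDeadline y (Deadline s y)).
Proof.
  intros H t s y Ht Hr. destruct (step p rho H t s Ht Hr) as [->|[M [Hc Ha]]]; [auto|].
  destruct Ha as (_&Hd&_&_). destruct (Hd y) as [Hd1 Hd2].
  destruct (classic (exists v, UU p M (rho t) t (UDeadline y v))) as [[v Hv]|Hn].
  - right. rewrite (Hd1 v Hv). destruct Hv as [A [_ HA]]. eauto.
  - left. apply Hd2. intros v Hv; apply Hn; eauto.
Qed.

Lemma upd_dir (p : Params) {Tr} A (st : State Tr) ct v :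
  updates p A st ct (UDir v) ->
  A = Controller /\ ((v = close /\ exists x, Deadline st x = Fin ct) \/
                     (v = open /\ Dir st = close /\ SafeToOpen p st ct)).
Proof.
  destruct A; simpl; intros H.
  - destruct H as [[_ H]|[_ H]]; discriminate.
  - split; auto.
    destruct H as [[x (_&_&H)]|[[x [Hx H]]|[[x (_&_&H)]|(H1&H2&H)]]];
      try discriminate; injection H; intros; subst; eauto.
Qed.

Lemma upd_gate (p : Params) {Tr} A (st : State Tr) ct v :
  updates p A st ct (UGate v) -> A = Gate /\ v = gof (Dir st).
Proof.
  destruct A; simpl; intros H.
  - destruct H as [[H1 H]|[H1 H]]; injection H; intros; subst; rewrite H1; auto.
  - destruct H as [[x (_&_&H)]|[[x [Hx H]]|[[x (_&_&H)]|(H1&H2&H)]]]; discriminate.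
Qed.

Lemma upd_dl (p : Params) {Tr} A (st : State Tr) ct x v :
  updates p A st ct (UDeadline x v) ->
  A = Controller /\
  ((TrackStatus st x = coming /\ Deadline st x = Inf /\ v = Fin (ct + W p)) \/
   (TrackStatus st x = empty /\ ERlt (Deadline st x) Inf /\ v = Inf)).
Proof.
  destruct A; simpl; intros H.
  - destruct H as [[_ H]|[_ H]]; discriminate.
  - split; auto.
    destruct H as [[y (H1&H2&H)]|[[y [Hx H]]|[[y (H1&H2&H)]|(H1&H2&H)]]];
      try discriminate; injection H; intros; subst; auto.
Qed.

Lemma stepG' {Tr} (p : Params) (rho : Traj Tr) : Hyp p rho ->
  forall t s, 0 <= t -> right_val rho t s ->
  GateStatus s = GateStatus (rho t) \/ GateStatus s = gof (Dir (rho t)).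
Proof.
  intros H t s Ht Hr. destruct (stepG p rho H t s Ht Hr) as [|[A HA]]; auto.
  apply upd_gate in HA. right; tauto.
Qed.

Definition dlvals {Tr} (l : list Tr) (s : State Tr) : list R :=
  flat_map (fun x => match Deadline s x with Fin r => r :: nil | Inf => nil end) l.

Lemma dlvals_in {Tr} (l : list Tr) s x r :
  In x l -> Deadline s x = Fin r -> In r (dlvals l s).
Proof.
  intros Hx Hd. unfold dlvals. apply in_flat_map. exists x. split; auto. rewrite Hd. simpl; auto.
Qed.

Lemma quiet {Tr} (p : Params) (rho : Traj Tr) : Hyp p rho ->
  forall t s, 0 <= t -> right_val rho t s ->
  forall y, TrackStatus s y = coming -> Deadline s y = Inf -> False.
Proof.
  intros H t s Ht Hr y Hy1 Hy2.
  destruct H as ([l Hl] & Hdc & Hdo & Hdm & Hlt & Hge & Hrr) .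
  destruct Hrr as (Hrun & Hinit & Htm & Himm & _).
  pose proof Hr as [e [He Hu]].
  destruct (avoid_list (dlvals l s) t (t + e) ltac:(lra)) as [u [Hu1 Hu2]].
  assert (Hsu : rho u = s) by (apply Hu; lra).
  assert (Hen : enabled p Controller (rho u) u).
  { rewrite Hsu. split.
    - split; [|split].
      + intros x v1 v2 H1 H2.
        apply upd_dl in H1. apply upd_dl in H2.
        destruct H1 as [_ [(A1&A2&A3)|(A1&A2&A3)]]; destruct H2 as [_ [(B1&B2&B3)|(B1&B2&B3)]];
          subst; congruence.
      + intros v1 v2 H1 H2. apply upd_dir in H1. apply upd_dir in H2.
        destruct H1 as [_ [[-> [x Hx]]|[-> _]]].
        { exfalso. apply Hu2. eapply dlvals_in; eauto. }
        destruct H2 as [_ [[-> [x Hx]]|[-> _]]]; auto.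
        exfalso. apply Hu2. eapply dlvals_in; eauto.
      + intros v1 v2 H1. apply upd_gate in H1. destruct H1; discriminate.
    - exists (UDeadline y (Fin (u + W p))). split.
      + simpl. left. exists y. auto.
      + simpl. rewrite Hy2. discriminate. }
  destruct (Himm u ltac:(lra) Hen) as [s2 [Hr2 [Hne _]]].
  assert (Hr3 : right_val rho u s) by (apply (rv_const rho t (t+e)); auto; lra).
  pose proof (rv_unique rho u s2 s Hr2 Hr3). congruence.
Qed.

Lemma cycle_locate {Tr} (p : Params) (rho : Traj Tr) y (q : nat -> R) k t :
  train_cycle p rho y q (k / 3) -> 0 <= q (3 * (k/3) + 1)%nat -> q k <= t < q (S k) ->
  TrackStatus (rho t) y = coming ->
  exists t1 t2, 0 <= t1 /\ t1 <= t < t2 /\ t1 + d_min p <= t2 /\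
     forall u, t1 <= u < t2 -> TrackStatus (rho u) y = coming.
Proof.
  intros Hc Hq Ht Hy.
  remember (k / 3)%nat as j.
  pose proof (Nat.div_mod_eq k 3) as Hk. pose proof (Nat.mod_upper_bound k 3 ltac:(lia)).
  rewrite <- Heqj in Hk.
  destruct Hc as (C1&C2&C3&C4).
  destruct (k mod 3)%nat as [|[|[|r]]] eqn:Hr; [ | | | lia].
  - assert (k = 3*j)%nat by lia. subst k.
    rewrite C1 in Hy; [discriminate|].
    replace (3*j+0)%nat with (3*j)%nat in Ht by lia.
    replace (S (3*j))%nat with (3*j+1)%nat in Ht by lia. lra.
  - assert (k = 3*j+1)%nat by lia. subst k.
    replace (S (3*j+1))%nat with (3*j+2)%nat in Ht by lia.
    exists (q (3*j+1)%nat), (q (3*j+2)%nat). repeat split; try lra. auto.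
  - assert (k = 3*j+2)%nat by lia. subst k.
    replace (S (3*j+2))%nat with (3*j+3)%nat in Ht by lia.
    rewrite C4 in Hy; [discriminate|lra].
Qed.

Lemma tm_get {Tr} (p : Params) (rho : Traj Tr) : Hyp p rho -> train_motion p rho.
Proof. intros (_&_&_&_&_&_&_&_&Htm&_). exact Htm. Qed.

Lemma coming_interval {Tr} (p : Params) (rho : Traj Tr) : Hyp p rho ->
  forall y t, 0 <= t -> TrackStatus (rho t) y = coming ->
  exists t1 t2, 0 <= t1 /\ t1 <= t < t2 /\ t1 + d_min p <= t2 /\
     forall u, t1 <= u < t2 -> TrackStatus (rho u) y = coming.
Proof.
  intros H y t Ht Hy. pose proof (tm_get p rho H y) as Htm.
  destruct H as (_&_&_&Hdm&_).
  destruct Htm as [[q [Hq0 [Hinc Hcyc]]] | [q [m [Hq0 [Hinc [Hcyc Hend]]]]]].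
  - assert (Hmono : forall a b, (a <= b)%nat -> q a <= q b).
    { intros a b Hab. induction Hab; [lra|]. pose proof (Hinc m). lra. }
    assert (Hgrow : forall i, INR i * d_min p <= q (3*i)%nat).
    { induction i.
      - simpl. rewrite Hq0. lra.
      - rewrite S_INR. destruct (Hcyc i) as (_&_&[C3 _]&_).
        pose proof (Hmono (3*i)%nat (3*i+1)%nat ltac:(lia)).
        pose proof (Hmono (3*i+2)%nat (3*S i)%nat ltac:(lia)). lra. }
    destruct (INR_archimed (d_min p) t ltac:(lra)) as [i Hi].
    pose proof (Hgrow i).
    destruct (part_find q (3*i) t (fun k _ => Hinc k) ltac:(lra) ltac:(lra)) as [k [Hk Hkt]].
    apply (cycle_locate p rho y q k t); auto.
    apply (part_nonneg q (3*(k/3)+1) Hq0); [intros; apply Hinc | lia].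
  - destruct (Rlt_dec t (q (3*m)%nat)) as [Hlt|Hge].
    + destruct (part_find q (3*m) t Hinc ltac:(lra) Hlt) as [k [Hk Hkt]].
      assert (Hkm : (k/3 < m)%nat) by (apply Nat.Div0.div_lt_upper_bound; lia).
      apply (cycle_locate p rho y q k t); auto.
      apply (part_nonneg q (3*m) Hq0 Hinc); lia.
    + rewrite Hend in Hy; [discriminate|lra].
Qed.

Lemma start_coming {Tr} (p : Params) (rho : Traj Tr) : Hyp p rho ->
  forall y t, 0 <= t -> TrackStatus (rho t) y = coming -> Deadline (rho t) y = Inf ->
  forall u, t <= u < t + d_min p -> TrackStatus (rho u) y = coming.
Proof.
  intros H y t Ht Hy Hd.
  destruct (coming_interval p rho H y t Ht Hy) as [t1 [t2 (H1&H2&H3&H4)]].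
  destruct (Req_dec t1 t) as [<-|Hne].
  - intros u Hu. apply H4. lra.
  - exfalso. destruct (LV p rho H t ltac:(lra)) as [s' [e [He [He2 Hs]]]].
    destruct (LC p rho H t s' ltac:(lra) (ex_intro _ e (conj He (conj He2 Hs)))) as [Hdl _].
    set (u0 := (Rmax (t - e) t1 + t) / 2).
    pose proof (Rmax_l (t-e) t1). pose proof (Rmax_r (t-e) t1).
    assert (Rmax (t-e) t1 < t) by (apply Rmax_lub_lt; lra).
    assert (Hu0 : rho u0 = s') by (apply Hs; unfold u0; lra).
    apply (quiet p rho H u0 s') with (y := y).
    + unfold u0; lra.
    + apply (rv_const rho (t - e) t); auto; unfold u0; lra.
    + rewrite <- Hu0. apply H4. unfold u0; lra.
    + rewrite <- Hdl. auto.
Qed.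

Lemma left_pick {Tr} (p : Params) (rho : Traj Tr) : Hyp p rho ->
  forall (P : R -> Prop) t, 0 < t -> (exists e, 0 < e /\ forall u, t - e < u < t -> P u) ->
  exists u, 0 < u < t /\ P u /\ Deadline (rho t) = Deadline (rho u) /\
    Dir (rho t) = Dir (rho u) /\ GateStatus (rho t) = GateStatus (rho u).
Proof.
  intros H P t Ht [e [He HP]].
  destruct (LV p rho H t Ht) as [s' Hl].
  pose proof (LC p rho H t s' Ht Hl) as (L1&L2&L3).
  destruct Hl as [e' [He' [He'2 Hs]]].
  set (m := Rmin e e'). assert (0 < m) by (apply Rmin_glb_lt; auto).
  pose proof (Rmin_l e e'). pose proof (Rmin_r e e').
  exists (t - m/2). assert (Hu : rho (t - m/2) = s') by (apply Hs; unfold m in *; lra).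
  rewrite Hu. repeat split; auto; try (unfold m in *; lra). apply HP; unfold m in *; lra.
Qed.

Lemma init_get {Tr} (p : Params) (rho : Traj Tr) : Hyp p rho -> initial (rho 0).
Proof. intros (_&_&_&_&_&_&_&Hi&_). exact Hi. Qed.

Lemma Jinv {Tr} (p : Params) (rho : Traj Tr) : Hyp p rho ->
  forall t, 0 <= t -> forall y d, Deadline (rho t) y = Fin d ->
  forall u, d - W p <= u < d + d_close p -> TrackStatus (rho u) y = coming.
Proof.
  intros H t Ht.
  apply (rind0 0 (t+1) (fun t => forall y d, Deadline (rho t) y = Fin d ->
     forall u, d - W p <= u < d + d_close p -> TrackStatus (rho u) y = coming)); [ | | | lra].
  - intros y d Hd. destruct (init_get p rho H y) as [_ Hi]. congruence.
  - intros t0 Ht0 HP. destruct (RV p rho H t0 ltac:(lra)) as [s Hs].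
    pose proof Hs as [e [He Hse]]. exists e. split; auto. intros u Hu y d Hd.
    rewrite (Hse u Hu) in Hd.
    destruct (stepDL p rho H t0 s y ltac:(lra) Hs) as [Heq|[A HA]].
    + apply (HP y d). congruence.
    + apply upd_dl in HA. destruct HA as [_ [(A1&A2&A3)|(A1&A2&A3)]]; [|congruence].
      rewrite Hd in A3. injection A3; intros ->.
      intros v Hv. apply (start_coming p rho H y t0); auto; try lra.
      unfold W in Hv. lra.
  - intros t0 Ht0 Hl. destruct (left_pick p rho H _ t0 ltac:(lra) Hl) as [u (Hu1&Hu2&Hu3&_)].
    intros y d Hd. apply (Hu2 y d). rewrite <- Hu3. auto.
Qed.

Definition dv (p : Params) (v : DirT) : R := match v with open => d_open p | close => d_close p end.

Lemma F3close {Tr} (p : Params) (rho : Traj Tr) : Hyp p rho ->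
  forall g s, 0 <= g -> right_val rho g s -> Dir s = close -> Dir (rho g) = open ->
  forall u, g < u < g + d_close p -> Dir (rho u) = close.
Proof.
  intros H g s Hg Hs Hc Ho.
  pose proof H as (_&Hdc&Hdo&Hdm&Hlt&Hge&_).
  assert (HW : 0 < W p) by (unfold W; lra).
  destruct (stepD p rho H g s Hg Hs) as [Heq|[?A HA]]; [congruence|].
  rewrite Hc in HA. apply upd_dir in HA.
  destruct HA as [_ [[_ [x Hx]]|[Hf _]]]; [|discriminate].
  pose proof (Jinv p rho H g Hg x g Hx) as Hcom.
  assert (Hpr : forall t, g < t < g + d_close p -> Dir (rho t) = close /\ Deadline (rho t) x = Fin g).
  { apply rind.
    - pose proof Hs as [e [He Hse]]. exists e. split; auto. intros u Hu. rewrite (Hse u Hu).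
      split; auto.
      destruct (stepDL p rho H g s x Hg Hs) as [Heq|[?A HA]]; [congruence|].
      apply upd_dl in HA. destruct HA as [_ [(A1&A2&A3)|(A1&A2&A3)]]; [congruence|].
      rewrite (Hcom g) in A1; [discriminate|lra].
    - intros t Ht [HP1 HP2]. destruct (RV p rho H t ltac:(lra)) as [s2 Hs2].
      pose proof Hs2 as [e [He Hse]]. exists e. split; auto. intros u Hu. rewrite (Hse u Hu).
      split.
      + destruct (stepD p rho H t s2 ltac:(lra) Hs2) as [Heq|[?A HA]]; [congruence|].
        apply upd_dir in HA. destruct HA as [_ [[-> _]|[_ [_ Hsafe]]]]; auto.
        exfalso. destruct (Hsafe x) as [Hemp|Hlt2].
        * rewrite (Hcom t) in Hemp; [discriminate|lra].
        * rewrite HP2 in Hlt2. simpl in Hlt2. lra.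
      + destruct (stepDL p rho H t s2 x ltac:(lra) Hs2) as [Heq|[?A HA]]; [congruence|].
        apply upd_dl in HA. destruct HA as [_ [(A1&A2&A3)|(A1&A2&A3)]]; [congruence|].
        rewrite (Hcom t) in A1; [discriminate|lra].
    - intros t Ht Hl. destruct (left_pick p rho H _ t ltac:(lra) Hl) as [u (Hu1&[P1 P2]&L1&L2&_)].
      rewrite L1, L2. auto. }
  intros u Hu. apply Hpr; auto.
Qed.

Definition Kd {Tr} (st : State Tr) (b : R) : Prop :=
  forall y, Deadline st y = Inf \/ exists d, Deadline st y = Fin d /\ b <= d.

Lemma F3open {Tr} (p : Params) (rho : Traj Tr) : Hyp p rho ->
  forall g s, 0 <= g -> right_val rho g s -> Dir s = open -> Dir (rho g) = close ->
  forall u, g < u < g + d_open p -> Dir (rho u) = open.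
Proof.
  intros H g s Hg Hs Ho Hc.
  pose proof H as (_&Hdc&Hdo&Hdm&Hlt&Hge&_).
  assert (HW : d_open p <= W p) by (unfold W; lra).
  destruct (step p rho H g s Hg Hs) as [Heq|[M [Hcons Happ]]]; [congruence|].
  pose proof Happ as (_&Hdl&[Hd1 Hd2]&_).
  assert (HM : M Controller /\ SafeToOpen p (rho g) g).
  { destruct (classic (exists v, UU p M (rho g) g (UDir v))) as [[v Hv]|Hn].
    - pose proof (Hd1 v Hv) as Hv2. destruct Hv as [?A [HMA HA]]. apply upd_dir in HA.
      destruct HA as [-> [[-> _]|[_ [_ Hsafe]]]]; [congruence|auto].
    - rewrite Hd2 in Ho; [congruence|]. intros v Hv; apply Hn; eauto. }
  destruct HM as [HM Hsafe].
  assert (K0 : Kd s (g + d_open p)).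
  { intros y. destruct (Hdl y) as [Hy1 Hy2].
    destruct (classic (exists v, UU p M (rho g) g (UDeadline y v))) as [[v Hv]|Hn].
    - rewrite (Hy1 v Hv). destruct Hv as [?A [_ HA]]. apply upd_dl in HA.
      destruct HA as [_ [(_&_&->)|(_&_&->)]]; auto. right. eexists; split; eauto. lra.
    - rewrite Hy2 by (intros v Hv; apply Hn; eauto).
      destruct (Deadline (rho g) y) as [d|] eqn:Hd; auto.
      destruct (Hsafe y) as [Hemp|Hlt2].
      + exfalso. apply Hn. exists Inf. exists Controller. split; auto. simpl.
        right; right; left. exists y. rewrite Hd. simpl. auto.
      + right. exists d. rewrite Hd in Hlt2. simpl in Hlt2. split; auto; lra. }
  assert (Hpr : forall t, g < t < g + d_open p -> Dir (rho t) = open /\ Kd (rho t) (g + d_open p)).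
  { apply rind.
    - pose proof Hs as [e [He Hse]]. exists e. split; auto. intros u Hu. rewrite (Hse u Hu). auto.
    - intros t Ht [HP1 HP2]. destruct (RV p rho H t ltac:(lra)) as [s2 Hs2].
      pose proof Hs2 as [e [He Hse]]. exists e. split; auto. intros u Hu. rewrite (Hse u Hu).
      split.
      + destruct (stepD p rho H t s2 ltac:(lra) Hs2) as [Heq|[?A HA]]; [congruence|].
        apply upd_dir in HA. destruct HA as [_ [[_ [x Hx]]|[-> _]]]; auto.
        exfalso. destruct (HP2 x) as [Hi|[d [Hd Hb]]]; [congruence|].
        rewrite Hd in Hx. injection Hx. lra.
      + intros y. destruct (stepDL p rho H t s2 y ltac:(lra) Hs2) as [Heq|[?A HA]].
        * rewrite Heq. apply HP2.
        * apply upd_dl in HA. destruct HA as [_ [(_&_&->)|(_&_&->)]]; auto.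
          right. eexists; split; eauto. lra.
    - intros t Ht Hl. destruct (left_pick p rho H _ t ltac:(lra) Hl) as [u (Hu1&[P1 P2]&L1&L2&_)].
      split; [congruence|]. intros y. rewrite L1. apply P2. }
  intros u Hu. apply Hpr; auto.
Qed.

Lemma F3 {Tr} (p : Params) (rho : Traj Tr) : Hyp p rho ->
  forall g s, 0 <= g -> right_val rho g s -> Dir s <> Dir (rho g) ->
  forall u, g < u < g + dv p (Dir s) -> Dir (rho u) = Dir s.
Proof.
  intros H g s Hg Hs Hne u Hu.
  destruct (Dir s) eqn:E; destruct (Dir (rho g)) eqn:E2; try congruence; simpl in Hu.
  - eapply F3open; eauto.
  - eapply F3close; eauto.
Qed.

Definition LCF {Tr X} (rho : Traj Tr) (F : State Tr -> X) : Prop :=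
  forall t s, 0 < t -> left_val rho t s -> F (rho t) = F s.

Lemma LCF_Dir {Tr} (p : Params) (rho : Traj Tr) : Hyp p rho -> LCF rho (@Dir Tr).
Proof. intros H t s Ht Hl. apply (LC p rho H t s Ht Hl). Qed.
Lemma LCF_Gate {Tr} (p : Params) (rho : Traj Tr) : Hyp p rho -> LCF rho (@GateStatus Tr).
Proof. intros H t s Ht Hl. apply (LC p rho H t s Ht Hl). Qed.

Lemma left_pickF {Tr X} (p : Params) (rho : Traj Tr) (F : State Tr -> X) : Hyp p rho -> LCF rho F ->
  forall (P : R -> Prop) t, 0 < t -> (exists e, 0 < e /\ forall u, t - e < u < t -> P u) ->
  exists u, 0 < u < t /\ P u /\ F (rho t) = F (rho u).
Proof.
  intros H HF P t Ht [e [He HP]].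
  destruct (LV p rho H t Ht) as [s' Hl].
  pose proof (HF t s' Ht Hl) as L1.
  destruct Hl as [e' [He' [He'2 Hs]]].
  set (m := Rmin e e'). assert (0 < m) by (apply Rmin_glb_lt; auto).
  pose proof (Rmin_l e e'). pose proof (Rmin_r e e').
  exists (t - m/2). assert (Hu : rho (t - m/2) = s') by (apply Hs; unfold m in *; lra).
  rewrite Hu. repeat split; auto; try (unfold m in *; lra). apply HP; unfold m in *; lra.
Qed.

Lemma sig_iff {Tr X} (p : Params) (rho : Traj Tr) (F : State Tr -> X) : Hyp p rho -> LCF rho F ->
  forall t, 0 < t ->
  (significant (fun u => F (rho u)) t <-> exists s, right_val rho t s /\ F s <> F (rho t)).
Proof.
  intros H HF t Ht. split.
  - intros [_ Hsig]. apply NNPP; intro Hn.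
    destruct (RV p rho H t ltac:(lra)) as [s Hs].
    assert (HsF : F s = F (rho t)) by (apply NNPP; intro; apply Hn; eauto).
    destruct (LV p rho H t Ht) as [s' Hl].
    pose proof (HF t s' Ht Hl) as L1.
    destruct Hl as [e' [He' [_ Hs']]]. destruct Hs as [e [He Hse]].
    set (m := Rmin e e'). assert (0 < m) by (apply Rmin_glb_lt; auto).
    pose proof (Rmin_l e e'). pose proof (Rmin_r e e').
    destruct (Hsig m H0) as [a [Ha [Hat Hne]]]. apply Hne.
    apply Rabs_def2 in Hat.
    destruct (Rtotal_order a t) as [Hlt|[->|Hgt]]; auto.
    + rewrite (Hs' a) by (unfold m in *; lra). congruence.
    + rewrite (Hse a) by (unfold m in *; lra). congruence.
  - intros [s [[e [He Hse]] Hne]]. split; [lra|]. intros eps Heps.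
    set (m := Rmin e eps). assert (0 < m) by (apply Rmin_glb_lt; auto).
    pose proof (Rmin_l e eps). pose proof (Rmin_r e eps).
    exists (t + m/2). split; [unfold m in *; lra|]. split.
    + rewrite Rabs_right; unfold m in *; lra.
    + rewrite (Hse (t + m/2)) by (unfold m in *; lra). auto.
Qed.

Definition nochange {Tr X} (rho : Traj Tr) (F : State Tr -> X) (t : R) : Prop :=
  forall s, right_val rho t s -> F s = F (rho t).

Lemma const_after {Tr X} (p : Params) (rho : Traj Tr) (F : State Tr -> X) : Hyp p rho -> LCF rho F ->
  forall a b s0, 0 <= a -> a < b -> right_val rho a s0 ->
  (forall t, a < t < b -> nochange rho F t) ->
  forall u, a < u <= b -> F (rho u) = F s0.
Proof.
  intros H HF a b s0 Ha Hab Hs0 Hnc.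
  assert (Hin : forall u, a < u < b -> F (rho u) = F s0).
  { apply rind.
    - destruct Hs0 as [e [He Hse]]. exists e. split; auto. intros u Hu. rewrite (Hse u Hu). auto.
    - intros t Ht HP. destruct (RV p rho H t ltac:(lra)) as [s Hs].
      pose proof (Hnc t Ht s Hs) as Hn.
      destruct Hs as [e [He Hse]]. exists e. split; auto. intros u Hu. rewrite (Hse u Hu). congruence.
    - intros t Ht Hl. destruct (left_pickF p rho F H HF _ t ltac:(lra) Hl) as [u (_&Hu&L)]. congruence. }
  intros u [Hu1 Hu2]. destruct (Rlt_dec u b) as [|Hb]; [apply Hin; lra|].
  assert (u = b) by lra. subst u.
  destruct (left_pickF p rho F H HF (fun u => a < u < b) b ltac:(lra)) as [u (_&Hu&L)].
  - exists (b - a). split; [lra|]. intros; lra.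
  - rewrite L. apply Hin; auto.
Qed.

Lemma const_from {Tr X} (p : Params) (rho : Traj Tr) (F : State Tr -> X) : Hyp p rho -> LCF rho F ->
  forall a b, 0 <= a -> a <= b ->
  (forall t, a <= t < b -> nochange rho F t) ->
  forall u, a <= u <= b -> F (rho u) = F (rho a).
Proof.
  intros H HF a b Ha Hab Hnc u Hu.
  destruct (Req_dec u a) as [->|Hne]; auto.
  destruct (RV p rho H a Ha) as [s0 Hs0].
  rewrite (const_after p rho F H HF a b s0 Ha ltac:(lra) Hs0); [ | intros; apply Hnc; lra | lra].
  apply (Hnc a ltac:(lra) s0 Hs0).
Qed.

Lemma gate_flat {Tr} (p : Params) (rho : Traj Tr) : Hyp p rho ->
  forall a b s v, 0 <= a -> a < b -> right_val rho a s -> GateStatus s = gof v ->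
  (forall u, a < u < b -> Dir (rho u) = v) ->
  (forall u, a < u <= b -> GateStatus (rho u) = gof v) /\
  (forall t, a < t < b -> nochange rho (@GateStatus Tr) t).
Proof.
  intros H a b s v Ha Hab Hs Hg Hd.
  assert (Hin : forall u, a < u < b -> GateStatus (rho u) = gof v).
  { apply rind.
    - destruct Hs as [e [He Hse]]. exists e. split; auto. intros u Hu. rewrite (Hse u Hu). auto.
    - intros t Ht HP. destruct (RV p rho H t ltac:(lra)) as [s2 Hs2].
      pose proof (stepG' p rho H t s2 ltac:(lra) Hs2) as Hn.
      destruct Hs2 as [e [He Hse]]. exists e. split; auto. intros u Hu. rewrite (Hse u Hu).
      rewrite Hd in Hn by auto. destruct Hn; congruence.
    - intros t Ht Hl. destruct (left_pickF p rho _ H (LCF_Gate p rho H) _ t ltac:(lra) Hl) as [u (_&Hu&L)].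
      congruence. }
  split.
  - intros u [Hu1 Hu2]. destruct (Rlt_dec u b) as [|Hb]; [apply Hin; lra|].
    assert (u = b) by lra. subst u.
    destruct (left_pickF p rho _ H (LCF_Gate p rho H) (fun u => a < u < b) b ltac:(lra)) as [u (_&Hu&L)].
    + exists (b - a). split; [lra|]. intros; lra.
    + rewrite L. apply Hin; auto.
  - intros t Ht s2 Hs2. destruct (stepG' p rho H t s2 ltac:(lra) Hs2) as [|Hn]; auto.
    rewrite Hn, Hd, Hin; auto.
Qed.

Definition chG {Tr} (rho : Traj Tr) (t : R) : Prop :=
  exists s, right_val rho t s /\ GateStatus s <> GateStatus (rho t).

Lemma gate_resp {Tr} (p : Params) (rho : Traj Tr) : Hyp p rho ->
  forall a v, 0 <= a -> (forall u, a < u < a + dv p v -> Dir (rho u) = v) ->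
  exists u, a < u < a + dv p v /\ GateStatus (rho u) = gof v.
Proof.
  intros H a v Ha Hd. destruct H as (_&_&_&_&_&_&Hrr).
  destruct Hrr as (_&_&_&_&_&HC&HO).
  apply NNPP; intro Hn.
  destruct v; simpl in *.
  - apply HO. exists a. split; auto. intros u Hu. split; auto.
    destruct (GateStatus (rho u)) eqn:E; auto. exfalso; apply Hn; eauto.
  - apply HC. exists a. split; auto. intros u Hu. split; auto.
    destruct (GateStatus (rho u)) eqn:E; auto. exfalso; apply Hn; eauto.
Qed.

Lemma gof_inj v1 v2 : gof v1 = gof v2 -> v1 = v2.
Proof. destruct v1, v2; simpl; congruence. Qed.

Lemma change_flat {Tr} (p : Params) (rho : Traj Tr) : Hyp p rho ->
  forall a b v t, 0 <= a -> (forall u, a < u <= b -> Dir (rho u) = v) -> a < t < b -> chG rho t ->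
  (forall u, t < u <= b -> GateStatus (rho u) = gof v) /\
  (forall t', t < t' < b -> nochange rho (@GateStatus Tr) t').
Proof.
  intros H a b v t Ha Hd Ht [s [Hs Hne]].
  destruct (stepG' p rho H t s ltac:(lra) Hs) as [|Hg]; [congruence|].
  rewrite Hd in Hg by lra.
  apply (gate_flat p rho H t b s v); auto; try lra.
  intros; apply Hd; lra.
Qed.

Lemma seg {Tr} (p : Params) (rho : Traj Tr) : Hyp p rho ->
  forall a b v, 0 <= a -> a + dv p v <= b -> (forall u, a < u <= b -> Dir (rho u) = v) ->
  Dir (rho a) <> v -> GateStatus (rho a) = gof (Dir (rho a)) ->
  (exists t, a < t < b /\ chG rho t) /\
  (forall t1 t2, a <= t1 < b -> a <= t2 < b -> chG rho t1 -> chG rho t2 -> t1 = t2) /\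
  ~ chG rho a /\ GateStatus (rho b) = gof v.
Proof.
  intros H a b v Ha Hb Hd Hda Hga.
  pose proof H as (_&_&Hdo0&_).
  assert (Hdv : 0 < dv p v) by (destruct v; simpl; destruct H as (_&?&?&_); lra).
  assert (Hna : ~ chG rho a).
  { intros [s [Hs Hne]]. destruct (stepG' p rho H a s Ha Hs); congruence. }
  assert (Hex : exists t, a < t < b /\ chG rho t).
  { destruct (gate_resp p rho H a v Ha ltac:(intros; apply Hd; lra)) as [u [Hu Hgu]].
    destruct (classic (exists t, a <= t < u /\ chG rho t)) as [[t [Ht Hc]]|Hn].
    - exists t. split; auto. destruct (Req_dec t a) as [->|]; [contradiction|lra].
    - exfalso. assert (GateStatus (rho u) = GateStatus (rho a)).
      { apply (const_from p rho _ H (LCF_Gate p rho H) a u Ha ltac:(lra)); [|lra].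
        intros t Ht s Hs. apply NNPP; intro Hne. apply Hn. exists t. split; auto. exists s; auto. }
      rewrite Hgu, Hga in H0. apply gof_inj in H0. congruence. }
  split; [exact Hex|]. split; [|split; auto].
  - intros t1 t2 Ht1 Ht2 Hc1 Hc2.
    assert (t1 <> a) by (intros ->; contradiction).
    assert (t2 <> a) by (intros ->; contradiction).
    destruct (Rtotal_order t1 t2) as [Hlt|[Heq|Hgt]]; auto; exfalso.
    + destruct (change_flat p rho H a b v t1 Ha Hd ltac:(lra) Hc1) as [_ Hn].
      destruct Hc2 as [s [Hs Hne]]. apply Hne. apply (Hn t2); auto; lra.
    + destruct (change_flat p rho H a b v t2 Ha Hd ltac:(lra) Hc2) as [_ Hn].
      destruct Hc1 as [s [Hs Hne]]. apply Hne. apply (Hn t1); auto; lra.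
  - destruct Hex as [t [Ht Hc]].
    destruct (change_flat p rho H a b v t Ha Hd Ht Hc) as [Hf _]. apply Hf; lra.
Qed.

Definition GH {Tr} (p : Params) (rho : Traj Tr) (I : nat -> Prop) (gamma : nat -> R) : Prop :=
  Hyp p rho /\ Dir (rho 0) = open /\ GateStatus (rho 0) = opened /\
  (forall i, I (S i) -> I i) /\ (forall i, I (S i) -> gamma i < gamma (S i)) /\
  (forall t, pos_sig (DirOf rho) t <-> exists i, I i /\ gamma i = t).

Lemma GH_hyp {Tr} p (rho : Traj Tr) I gamma : GH p rho I gamma -> Hyp p rho.
Proof. intros [H _]; exact H. Qed.

Lemma chD_iff {Tr} p (rho : Traj Tr) I gamma : GH p rho I gamma ->
  forall t, 0 < t -> ((exists s, right_val rho t s /\ Dir s <> Dir (rho t)) <-> exists i, I i /\ gamma i = t).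
Proof.
  intros G t Ht. destruct G as (H&_&_&_&_&Hg).
  rewrite <- (sig_iff p rho _ H (LCF_Dir p rho H) t Ht). rewrite <- Hg.
  unfold pos_sig, DirOf. tauto.
Qed.

Lemma gpos {Tr} p (rho : Traj Tr) I gamma : GH p rho I gamma -> forall i, I i -> 0 < gamma i.
Proof.
  intros G i Hi. destruct G as (_&_&_&_&_&Hg). destruct (proj2 (Hg (gamma i)) (ex_intro _ i (conj Hi eq_refl))) as [? _]. auto.
Qed.

Lemma gmono {Tr} p (rho : Traj Tr) I gamma : GH p rho I gamma ->
  forall j k, (j < k)%nat -> I k -> gamma j < gamma k.
Proof.
  intros G j k Hjk. destruct G as (_&_&_&Hd&Hinc&_).
  induction Hjk; intros Hk.
  - apply Hinc; auto.
  - pose proof (Hinc m Hk). pose proof (IHHjk (Hd m Hk)). lra.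
Qed.

Lemma I_down {Tr} p (rho : Traj Tr) I gamma : GH p rho I gamma ->
  forall j k, (j <= k)%nat -> I k -> I j.
Proof.
  intros G j k Hjk. destruct G as (_&_&_&Hd&_).
  induction Hjk; auto.
Qed.

Lemma noD_between {Tr} p (rho : Traj Tr) I gamma : GH p rho I gamma ->
  forall i t, I i -> gamma i < t -> (I (S i) -> t < gamma (S i)) -> nochange rho (@Dir Tr) t.
Proof.
  intros G i t Hi Ht1 Ht2 s Hs. apply NNPP; intro Hne.
  pose proof (gpos p rho I gamma G i Hi).
  destruct (proj1 (chD_iff p rho I gamma G t ltac:(lra)) (ex_intro _ s (conj Hs Hne))) as [j [Hj <-]].
  destruct (Compare_dec.le_lt_dec j i) as [Hji|Hij].
  - destruct (Nat.eq_dec j i) as [->|Hne2]; [lra|].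
    pose proof (gmono p rho I gamma G j i ltac:(lia) Hi). lra.
  - assert (HSi : I (S i)) by (apply (I_down p rho I gamma G (S i) j); auto).
    specialize (Ht2 HSi).
    destruct (Nat.eq_dec j (S i)) as [->|Hne2]; [lra|].
    pose proof (gmono p rho I gamma G (S i) j ltac:(lia) Hj). lra.
Qed.

Lemma noD_before {Tr} p (rho : Traj Tr) I gamma : GH p rho I gamma ->
  forall t, 0 <= t -> (I 0%nat -> t < gamma 0%nat) -> nochange rho (@Dir Tr) t.
Proof.
  intros G t Ht0 Ht s Hs. pose proof (GH_hyp _ _ _ _ G) as H.
  destruct (Req_dec t 0) as [->|Hne0].
  - destruct (stepD p rho H 0 s Ht0 Hs) as [|[A HA]]; auto.
    apply upd_dir in HA. destruct G as (_&HD0&_).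
    destruct HA as [_ [[_ [x Hx]]|[_ [Hc _]]]]; [|congruence].
    destruct (init_get p rho H x) as [_ Hi]. congruence.
  - apply NNPP; intro Hne.
    destruct (proj1 (chD_iff p rho I gamma G t ltac:(lra)) (ex_intro _ s (conj Hs Hne))) as [j [Hj <-]].
    specialize (Ht (I_down p rho I gamma G 0 j ltac:(lia) Hj)).
    destruct j; [lra|]. pose proof (gmono p rho I gamma G 0 (S j) ltac:(lia) Hj). lra.
Qed.

Lemma dir_seg {Tr} p (rho : Traj Tr) I gamma : GH p rho I gamma ->
  forall i s, I i -> right_val rho (gamma i) s ->
  forall u, gamma i < u -> (I (S i) -> u <= gamma (S i)) -> Dir (rho u) = Dir s.
Proof.
  intros G i s Hi Hs u Hu1 Hu2. pose proof (GH_hyp _ _ _ _ G) as H.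
  pose proof (gpos p rho I gamma G i Hi).
  apply (const_after p rho _ H (LCF_Dir p rho H) (gamma i) u s); try lra; auto.
  intros t Ht. apply (noD_between p rho I gamma G i t Hi); try lra.
  intros HS. specialize (Hu2 HS). lra.
Qed.

Lemma dir_change {Tr} p (rho : Traj Tr) I gamma : GH p rho I gamma ->
  forall i s, I i -> right_val rho (gamma i) s -> Dir s <> Dir (rho (gamma i)).
Proof.
  intros G i s Hi Hs.
  pose proof (gpos p rho I gamma G i Hi).
  destruct (proj2 (chD_iff p rho I gamma G (gamma i) H) (ex_intro _ i (conj Hi eq_refl))) as [s' [Hs' Hne]].
  rewrite (rv_unique rho _ s s' Hs Hs'). auto.
Qed.

Lemma gap {Tr} p (rho : Traj Tr) I gamma : GH p rho I gamma ->
  forall i s, I (S i) -> right_val rho (gamma i) s -> gamma i + dv p (Dir s) <= gamma (S i).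
Proof.
  intros G i s HSi Hs. pose proof (GH_hyp _ _ _ _ G) as H.
  assert (Hi : I i) by (destruct G as (_&_&_&Hd&_); auto).
  pose proof (gpos p rho I gamma G i Hi).
  pose proof (gmono p rho I gamma G i (S i) ltac:(lia) HSi).
  apply Rnot_lt_le; intro Hlt.
  pose proof (F3 p rho H (gamma i) s ltac:(lra) Hs (dir_change p rho I gamma G i s Hi Hs)) as Hf.
  destruct (RV p rho H (gamma (S i)) ltac:(lra)) as [s' Hs'].
  pose proof (dir_change p rho I gamma G (S i) s' HSi Hs') as Hne.
  rewrite (dir_seg p rho I gamma G i s Hi Hs (gamma (S i))) in Hne; auto; try lra.
  destruct Hs' as [e [He Hse]].
  set (m := Rmin e (gamma i + dv p (Dir s) - gamma (S i))).
  assert (0 < m) by (apply Rmin_glb_lt; lra).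
  pose proof (Rmin_l e (gamma i + dv p (Dir s) - gamma (S i))).
  pose proof (Rmin_r e (gamma i + dv p (Dir s) - gamma (S i))).
  apply Hne. rewrite <- (Hse (gamma (S i) + m/2)) by (unfold m in *; lra).
  apply Hf. unfold m in *; lra.
Qed.

Lemma dir_init {Tr} p (rho : Traj Tr) I gamma : GH p rho I gamma ->
  forall b, 0 < b -> (I 0%nat -> b <= gamma 0%nat) -> forall u, 0 <= u <= b -> Dir (rho u) = open.
Proof.
  intros G b Hb Hib u Hu. pose proof (GH_hyp _ _ _ _ G) as H.
  assert (HD0 : Dir (rho 0) = open) by (destruct G as (_&HD0&_); exact HD0). rewrite <- HD0.
  apply (const_from p rho _ H (LCF_Dir p rho H) 0 b); try lra.
  intros t Ht. apply (noD_before p rho I gamma G t ltac:(lra)). intros HI. specialize (Hib HI). lra.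
Qed.

Lemma gate_init {Tr} p (rho : Traj Tr) I gamma : GH p rho I gamma ->
  forall b, 0 < b -> (I 0%nat -> b <= gamma 0%nat) ->
  (forall u, 0 < u <= b -> GateStatus (rho u) = opened) /\
  (forall t, 0 < t < b -> nochange rho (@GateStatus Tr) t).
Proof.
  intros G b Hb Hib. pose proof (GH_hyp _ _ _ _ G) as H.
  destruct (RV p rho H 0 ltac:(lra)) as [s0 Hs0].
  assert (Hg0 : GateStatus s0 = gof open).
  { destruct G as (_&HD0&HG0&_). destruct (stepG' p rho H 0 s0 ltac:(lra) Hs0) as [E|E]; rewrite E; auto.
    rewrite HD0; auto. }
  apply (gate_flat p rho H 0 b s0 open); auto; try lra.
  intros u Hu. apply (dir_init p rho I gamma G b Hb Hib); lra.
Qed.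

Lemma gate_at {Tr} p (rho : Traj Tr) I gamma : GH p rho I gamma ->
  forall i, I i -> GateStatus (rho (gamma i)) = gof (Dir (rho (gamma i))).
Proof.
  intros G i. pose proof (GH_hyp _ _ _ _ G) as H. induction i; intros Hi.
  - pose proof (gpos p rho I gamma G 0 Hi).
    rewrite (dir_init p rho I gamma G (gamma 0%nat)) by (auto; lra).
    apply (gate_init p rho I gamma G (gamma 0%nat)); auto; lra.
  - assert (Hi' : I i) by (destruct G as (_&_&_&Hd&_); auto).
    pose proof (gpos p rho I gamma G i Hi').
    destruct (RV p rho H (gamma i) ltac:(lra)) as [s Hs].
    pose proof (gmono p rho I gamma G i (S i) ltac:(lia) Hi).
    destruct (seg p rho H (gamma i) (gamma (S i)) (Dir s)) as (_&_&_&Hb).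
    + lra.
    + apply (gap p rho I gamma G); auto.
    + intros u Hu. apply (dir_seg p rho I gamma G i s Hi' Hs); lra.
    + apply not_eq_sym. apply (dir_change p rho I gamma G i s Hi' Hs).
    + apply IHi; auto.
    + rewrite Hb. rewrite (dir_seg p rho I gamma G i s Hi' Hs); auto; lra.
Qed.

Lemma seg_i {Tr} p (rho : Traj Tr) I gamma : GH p rho I gamma ->
  forall i b, I i ->
  ((I (S i) /\ b = gamma (S i)) \/
   (~ I (S i) /\ exists s, right_val rho (gamma i) s /\ gamma i + dv p (Dir s) <= b)) ->
  (exists t, gamma i < t < b /\ chG rho t) /\
  (forall t1 t2, gamma i <= t1 < b -> gamma i <= t2 < b -> chG rho t1 -> chG rho t2 -> t1 = t2) /\
  ~ chG rho (gamma i).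
Proof.
  intros G i b Hi Hb. pose proof (GH_hyp _ _ _ _ G) as H.
  pose proof (gpos p rho I gamma G i Hi).
  destruct Hb as [[HS ->]|[HnS [s [Hs Hb]]]].
  - destruct (RV p rho H (gamma i) ltac:(lra)) as [s Hs].
    destruct (seg p rho H (gamma i) (gamma (S i)) (Dir s)) as (X1&X2&X3&_); auto.
    + lra.
    + apply (gap p rho I gamma G); auto.
    + intros u Hu. apply (dir_seg p rho I gamma G i s Hi Hs); lra.
    + apply not_eq_sym. apply (dir_change p rho I gamma G i s Hi Hs).
    + apply (gate_at p rho I gamma G i Hi).
  - destruct (seg p rho H (gamma i) b (Dir s)) as (X1&X2&X3&_); auto.
    + lra.
    + intros u Hu. apply (dir_seg p rho I gamma G i s Hi Hs); [lra|tauto].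
    + apply not_eq_sym. apply (dir_change p rho I gamma G i s Hi Hs).
    + apply (gate_at p rho I gamma G i Hi).
Qed.

Lemma find_i (I : nat -> Prop) (gamma : nat -> R) t :
  forall k, I 0%nat -> gamma 0%nat <= t -> (~ I k \/ t < gamma k) ->
  exists i, I i /\ gamma i <= t /\ (I (S i) -> t < gamma (S i)).
Proof.
  induction k; intros H0 Ht Hk.
  - destruct Hk; [contradiction|lra].
  - destruct (classic (~ I k \/ t < gamma k)) as [Hc|Hc]; auto.
    exists k. apply not_or_and in Hc. destruct Hc as [Hc1 Hc2]. apply NNPP in Hc1.
    split; auto. split; [lra|]. intros HS. destruct Hk; [contradiction|auto].
Qed.

Lemma main_gen {Tr} p (rho : Traj Tr) I gamma : GH p rho I gamma ->
  (forall t, exists k, ~ I k \/ t < gamma k) ->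
  exists delta : nat -> R,
    (forall i, I i -> gamma i < delta i /\ (I (S i) -> delta i < gamma (S i))) /\
    (forall t, pos_sig (GateOf rho) t <-> exists i, I i /\ delta i = t).
Proof.
  intros G Hunb. pose proof (GH_hyp _ _ _ _ G) as H.
  assert (Hex : forall i, exists d, I i -> gamma i < d /\ (I (S i) -> d < gamma (S i)) /\ chG rho d).
  { intros i. destruct (classic (I i)) as [Hi|Hi]; [|exists 0; tauto].
    pose proof (gpos p rho I gamma G i Hi).
    destruct (classic (I (S i))) as [HS|HS].
    - destruct (seg_i p rho I gamma G i (gamma (S i)) Hi (or_introl (conj HS eq_refl))) as [[t [Ht Hc]] _].
      exists t. intros _. split; [lra|]. split; auto. intros; lra.
    - destruct (RV p rho H (gamma i) ltac:(lra)) as [s Hs].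
      destruct (seg_i p rho I gamma G i (gamma i + dv p (Dir s)) Hi
                  (or_intror (conj HS (ex_intro _ s (conj Hs (Rle_refl _)))))) as [[t [Ht Hc]] _].
      exists t. intros _. split; [lra|]. split; auto. intros; contradiction. }
  set (delta := fun i => proj1_sig (constructive_indefinite_description _ (Hex i))).
  assert (Hd : forall i, I i -> gamma i < delta i /\ (I (S i) -> delta i < gamma (S i)) /\ chG rho (delta i)).
  { intros i. unfold delta. destruct (constructive_indefinite_description _ (Hex i)). simpl. auto. }
  exists delta. split; [intros i Hi; destruct (Hd i Hi); tauto|].
  intros t. split.
  - intros [Ht Hsig].
    assert (Hc : chG rho t).
    { unfold GateOf in Hsig. apply (sig_iff p rho _ H (LCF_Gate p rho H) t Ht) in Hsig. exact Hsig. }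
    destruct (classic (I 0%nat /\ gamma 0%nat <= t)) as [[HI0 Hg0]|Hn].
    + destruct (Hunb t) as [k Hk].
      destruct (find_i I gamma t k HI0 Hg0 Hk) as [i (Hi&Hit&HiS)].
      exists i. split; auto.
      destruct (Hd i Hi) as (D1&D2&D3).
      destruct (classic (I (S i))) as [HS|HS].
      * destruct (seg_i p rho I gamma G i (gamma (S i)) Hi (or_introl (conj HS eq_refl))) as [_ [Hu _]].
        specialize (D2 HS); specialize (HiS HS); apply Hu; auto; lra.
      * pose proof (gpos p rho I gamma G i Hi).
        destruct (RV p rho H (gamma i) ltac:(lra)) as [s Hs].
        set (b := Rmax (Rmax t (delta i)) (gamma i + dv p (Dir s)) + 1).
        pose proof (Rmax_l (Rmax t (delta i)) (gamma i + dv p (Dir s))).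
        pose proof (Rmax_r (Rmax t (delta i)) (gamma i + dv p (Dir s))).
        pose proof (Rmax_l t (delta i)). pose proof (Rmax_r t (delta i)).
        assert (Hbb : gamma i + dv p (Dir s) <= b) by (unfold b; lra).
        destruct (seg_i p rho I gamma G i b Hi
                   (or_intror (conj HS (ex_intro _ s (conj Hs Hbb))))) as [_ [Hu _]].
        apply Hu; auto; unfold b; lra.
    + exfalso.
      set (b := t + 1).
      assert (Hb : exists b, t < b /\ (I 0%nat -> b <= gamma 0%nat)).
      { destruct (classic (I 0%nat)) as [HI0|HI0].
        - exists (gamma 0%nat). split; [|lra]. apply Rnot_le_lt. intro; apply Hn; auto.
        - exists (t+1). split; [lra|]. intros; contradiction. }
      destruct Hb as [b' [Hb1 Hb2]].
      destruct (gate_init p rho I gamma G b' ltac:(lra) Hb2) as [_ Hnc].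
      destruct Hc as [s [Hs Hne]]. apply Hne. apply (Hnc t); auto.
  - intros [i [Hi <-]]. destruct (Hd i Hi) as (D1&_&D3).
    pose proof (gpos p rho I gamma G i Hi).
    split; [lra|]. unfold GateOf. apply (sig_iff p rho _ H (LCF_Gate p rho H)); auto. lra.
Qed.

Theorem mainTheorem14 :
  forall (Tr : Type) (p : Params) (rho : Traj Tr),
    (exists l : list Tr, forall x, List.In x l) ->
    0 < d_close p -> 0 < d_open p -> 0 < d_min p -> 0 < d_max p ->
    d_close p < d_min p -> d_min p <= d_max p ->
    d_min p >= d_close p + d_open p ->
    regular_run p rho ->
    Dir (rho 0) = open -> GateStatus (rho 0) = opened ->
    (* (1) infinitely many positive significant moments of Dir *)
    (forall gamma : nat -> R,
       (forall i, gamma i < gamma (S i)) ->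
       (forall t, pos_sig (DirOf rho) t <-> exists i, gamma i = t) ->
       exists delta : nat -> R,
         (forall i, delta i < delta (S i)) /\
         (forall t, pos_sig (GateOf rho) t <-> exists i, delta i = t) /\
         (forall i, gamma i < delta i < gamma (S i)))
    /\
    (* (2) finitely many (n) positive significant moments of Dir *)
    (forall (n : nat) (gamma : nat -> R),
       (forall i, (S i < n)%nat -> gamma i < gamma (S i)) ->
       (forall t, pos_sig (DirOf rho) t <-> exists i, (i < n)%nat /\ gamma i = t) ->
       exists delta : nat -> R,
         (forall i, (S i < n)%nat -> delta i < delta (S i)) /\
         (forall t, pos_sig (GateOf rho) t <-> exists i, (i < n)%nat /\ delta i = t) /\
         (forall i, (S i < n)%nat -> gamma i < delta i < gamma (S i)) /\
         (forall i, S i = n -> gamma i < delta i)).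
Proof.
  intros Tr p rho Hl Hdc Hdo Hdm Hdx Hlt Hle Hge Hrr HD0 HG0.
  assert (H : Hyp p rho) by exact (conj Hl (conj Hdc (conj Hdo (conj Hdm (conj Hlt (conj Hge Hrr)))))) .
  split.
  - intros gamma Hinc Hg.
    assert (G : GH p rho (fun _ => True) gamma).
    { refine (conj H (conj HD0 (conj HG0 (conj _ (conj _ _))))); auto.
      intros t. rewrite Hg. split; intros [i Hi]; exists i; tauto. }
    assert (Hunb : forall t, exists k, ~ True \/ t < gamma k).
    { intros t. set (m := Rmin (d_close p) (d_open p)).
      assert (0 < m) by (apply Rmin_glb_lt; auto).
      pose proof (Rmin_l (d_close p) (d_open p)). pose proof (Rmin_r (d_close p) (d_open p)).
      assert (Hgr : forall i, gamma 0%nat + INR i * m <= gamma i).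
      { induction i; [simpl; lra|].
        destruct (RV p rho H (gamma i)) as [s Hs].
        { pose proof (gpos p rho _ gamma G i I). lra. }
        pose proof (gap p rho _ gamma G i s I Hs). rewrite S_INR.
        assert (m <= dv p (Dir s)) by (destruct (Dir s); simpl; unfold m in *; lra). lra. }
      destruct (INR_archimed m (t - gamma 0%nat) ltac:(lra)) as [k Hk].
      exists k. right. pose proof (Hgr k). lra. }
    destruct (main_gen p rho _ gamma G Hunb) as [delta [Hd1 Hd2]].
    exists delta. split; [|split].
    + intros i. destruct (Hd1 i I) as [_ A1]. destruct (Hd1 (S i) I) as [A2 _].
      specialize (A1 I). lra.
    + intros t. rewrite Hd2. split; intros [i Hi]; exists i; tauto.
    + intros i. destruct (Hd1 i I) as [A1 A2]. split; auto.
  - intros n gamma Hinc Hg.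
    assert (G : GH p rho (fun i => (i < n)%nat) gamma).
    { refine (conj H (conj HD0 (conj HG0 (conj _ (conj _ _))))); auto.
      intros i Hi; lia. }
    assert (Hunb : forall t, exists k, ~ (k < n)%nat \/ t < gamma k).
    { intros t. exists n. left. lia. }
    destruct (main_gen p rho _ gamma G Hunb) as [delta [Hd1 Hd2]].
    exists delta. split; [|split; [|split]].
    + intros i Hi. destruct (Hd1 i ltac:(lia)) as [_ A1]. destruct (Hd1 (S i) Hi) as [A2 _].
      specialize (A1 Hi). lra.
    + exact Hd2.
    + intros i Hi. destruct (Hd1 i ltac:(lia)) as [A1 A2]. split; auto.
    + intros i Hi. destruct (Hd1 i ltac:(lia)) as [A1 _]. auto.
Qed.
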